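(* Let $M$ be a simple binary matroid and $C$ a circuit of $M$. The following are equivalent: (1) $C\notin B_M$; (2) there are circuits $C_1,C_2$ of $M$ such that $|C_1\cap C_2|=1$ and $C_1\triangle C_2=C$.
   Context: A matroid $M=([n],\mathscr C)$ is given by its circuit set $\mathscr C$. It is simple if every circuit has cardinality greater than $2$, and binary if it is representable over $\mathbb F_2$. Let ${\bf TP}^{n-1}$ be the tropical projective space over $(\mathbb R\cup\{-\infty\},\max,+)$. For a circuit $C$, $V(C)$ is the set of $x\in{\bf TP}^{n-1}$ such that $\max\{x_i:i\in C\}$ is attained at least twice. For $B\subseteq\mathscr C$, set $V(B)=\bigcap_{C\in B}V(C)$. A subset $B\subseteq\mathscr C$ is a tropical basis if $V(B)=V(\mathscr C)$. $B_M$ denotes the intersection of all tropical bases of $M$. $\triangle$ denotes symmetric difference. *)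

(* Defs.v *)
From mathcomp Require Import all_boot all_order all_algebra.
From Stdlib Require Reals.
Set Implicit Arguments.
Unset Strict Implicit.
Unset Printing Implicit Defensive.

Definition matroid_circuits (n : nat) (Cs : {set {set 'I_n}}) : Prop :=
  [/\ set0 \notin Cs,
      (forall C1 C2, C1 \in Cs -> C2 \in Cs -> C1 \subset C2 -> C1 = C2) &
      (forall C1 C2 e, C1 \in Cs -> C2 \in Cs -> C1 != C2 -> e \in C1 :&: C2 ->
         exists2 C3, C3 \in Cs & C3 \subset (C1 :|: C2) :\ e)].

Definition simple_matroid (n : nat) (Cs : {set {set 'I_n}}) : Prop :=
  forall C, C \in Cs -> 2 < #|C|.

Definition dependent_cols (m n : nat) (A : 'M['F_2]_(m, n)) (D : {set 'I_n}) : Prop :=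
  exists v : 'cV['F_2]_n,
    [/\ (v != 0)%R, (forall i, i \notin D -> v i ord0 = 0%R) & (A *m v = 0)%R].

Definition col_circuit (m n : nat) (A : 'M['F_2]_(m, n)) (C : {set 'I_n}) : Prop :=
  dependent_cols A C /\ (forall D : {set 'I_n}, D \proper C -> ~ dependent_cols A D).

Definition binary_matroid (n : nat) (Cs : {set {set 'I_n}}) : Prop :=
  exists m (A : 'M['F_2]_(m, n)), forall C, C \in Cs <-> col_circuit A C.

(* Tropical numbers R \cup {-oo}: None = -oo. *)
Definition trop := option Reals.Rdefinitions.R.
Definition trop_le (a b : trop) : Prop :=
  match a, b with
  | None, _ => True
  | Some _, None => False
  | Some x, Some y => Reals.Rdefinitions.Rle x y
  end.

(* Points of TP^{n-1} are represented by their representatives in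
   (R \cup {-oo})^n that are not identically -oo; all the sets V(.) below are
   invariant under tropical scaling (adding a real constant), so this is
   equivalent to working in the quotient. *)
Definition TPpoint (n : nat) (x : 'I_n -> trop) : Prop := exists i, x i <> None.

Definition inV (n : nat) (C : {set 'I_n}) (x : 'I_n -> trop) : Prop :=
  exists i j, [/\ i \in C, j \in C, i != j, x i = x j &
                  forall k, k \in C -> trop_le (x k) (x i)].

Definition inVB (n : nat) (B : {set {set 'I_n}}) (x : 'I_n -> trop) : Prop :=
  forall C, C \in B -> inV C x.

Definition tropical_basis (n : nat) (Cs B : {set {set 'I_n}}) : Prop :=
  B \subset Cs /\
  (forall x, TPpoint x -> (inVB B x <-> inVB Cs x)).

Definition in_BM (n : nat) (Cs : {set {set 'I_n}}) (C : {set 'I_n}) : Prop :=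
  forall B, tropical_basis Cs B -> C \in B.

Definition symdiff (n : nat) (A B : {set 'I_n}) : {set 'I_n} := (A :\: B) :|: (B :\: A).

(* Main.v *)
Require Import Defs.
From mathcomp Require Import all_boot all_order all_algebra.
From Stdlib Require Reals.
From Stdlib Require Import Lra Classical.

Set Implicit Arguments.
Unset Strict Implicit.
Unset Printing Implicit Defensive.

Lemma trop_le_refl a : trop_le a a.
Proof. case: a => [r|] //=; apply: Reals.RIneq.Rle_refl. Qed.
Lemma trop_le_trans a b c : trop_le a b -> trop_le b c -> trop_le a c.
Proof. case: a => [a|]; case: b => [b|]; case: c => [c|] //=; apply: Reals.RIneq.Rle_trans. Qed.
Lemma trop_le_anti a b : trop_le a b -> trop_le b a -> a = b.
Proof. case: a => [a|]; case: b => [b|] //= h1 h2. by rewrite (Reals.RIneq.Rle_antisym _ _ h1 h2). Qed.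
Lemma trop_le_total a b : trop_le a b \/ trop_le b a.
Proof.
case: a => [a|]; case: b => [b|] /=; auto.
destruct (Reals.RIneq.Rle_dec a b); [left|right]; auto; lra.
Qed.

Lemma in_symdiff n (S T : {set 'I_n}) k :
  (k \in symdiff S T) = ((k \in S) && (k \notin T)) || ((k \in T) && (k \notin S)).
Proof. by rewrite /symdiff !inE; case: (k \in S); case: (k \in T). Qed.

Lemma inV_symdiff_aux n (C1 C2 : {set 'I_n}) e x i1 j1 i2 j2 :
  C1 :&: C2 = [set e] ->
  i1 \in C1 -> j1 \in C1 -> i1 != j1 -> x i1 = x j1 ->
  (forall k, k \in C1 -> trop_le (x k) (x i1)) ->
  i2 \in C2 -> j2 \in C2 -> i2 != j2 -> x i2 = x j2 ->
  (forall k, k \in C2 -> trop_le (x k) (x i2)) ->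
  trop_le (x i2) (x i1) -> inV (symdiff C1 C2) x.
Proof.
move=> He i1C j1C ij1 x1 m1 i2C j2C ij2 x2 m2 le21.
have inI k : k \in C1 -> k \in C2 -> k = e.
  by move=> h1 h2; apply/set1P; rewrite -He inE h1 h2.
have eC : e \in C1 :&: C2 by rewrite He set11.
move: eC; rewrite inE => /andP[eC1 eC2].
have mx k : k \in symdiff C1 C2 -> trop_le (x k) (x i1).
  rewrite in_symdiff => /orP[/andP[h _]|/andP[h _]]; first exact: m1.
  exact: trop_le_trans (m2 _ h) le21.
have sd1 k : k \in C1 -> k != e -> k \in symdiff C1 C2.
  move=> h ne; rewrite in_symdiff h /=; apply/orP; left.
  by apply/negP => h2; move/eqP: ne; apply; apply: inI.
have sd2 k : k \in C2 -> k != e -> k \in symdiff C1 C2.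
  move=> h ne; rewrite in_symdiff h /=; apply/orP; right.
  by apply/negP => h2; move/eqP: ne; apply; apply: inI.
case: (boolP ((i1 != e) && (j1 != e))) => [/andP[ie je]|].
  exists i1, j1; split => //; [exact: sd1|exact: sd1].
rewrite negb_and !negbK => hij.
have xe : x e = x i1.
  by case/orP: hij => /eqP <-.
have [p [pC pe xp]] : exists p, [/\ p \in C1, p != e & x p = x i1].
  case/orP: hij => /eqP he.
    exists j1; split => //; by rewrite -he eq_sym.
  exists i1; split => //; by rewrite -he.
have [q [qC qe xq]] : exists q, [/\ q \in C2, q != e & x q = x i2].
  case: (eqVneq i2 e) => he.
    exists j2; split => //; by rewrite -he eq_sym.
  by exists i2; split.
have x12 : x i1 = x i2.
  apply: trop_le_anti => //; rewrite -xe; exact: m2.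
exists p, q; split.
- exact: sd1.
- exact: sd2.
- apply/negP => /eqP pq; move/eqP: pe; apply; apply: inI => //; by rewrite pq.
- by rewrite xp xq.
- by move=> k hk; rewrite xp; apply: mx.
Qed.

Lemma inV_symdiff n (C1 C2 : {set 'I_n}) e x :
  C1 :&: C2 = [set e] -> inV C1 x -> inV C2 x -> inV (symdiff C1 C2) x.
Proof.
move=> He [i1 [j1 [i1C j1C ij1 x1 m1]]] [i2 [j2 [i2C j2C ij2 x2 m2]]].
case: (trop_le_total (x i2) (x i1)) => h.
  exact: (inV_symdiff_aux He i1C j1C ij1 x1 m1 i2C j2C ij2 x2 m2 h).
have -> : symdiff C1 C2 = symdiff C2 C1 by rewrite /symdiff setUC.
rewrite setIC in He.
exact: (inV_symdiff_aux He i2C j2C ij2 x2 m2 i1C j1C ij1 x1 m1 h).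
Qed.

Lemma F2_cases (a : 'F_2) : a = 0%R \/ a = 1%R.
Proof. case: a => [[|[|k]] Hk]; [left|right|]; try by apply: val_inj. by []. Qed.
Lemma F2_11 : (1 + 1 : 'F_2)%R = 0%R. Proof. exact: val_inj. Qed.
Lemma F2_10 : (1 : 'F_2)%R != 0%R. Proof. exact: GRing.oner_neq0. Qed.

Definition chi n (S : {set 'I_n}) : 'cV['F_2]_n :=
  \col_i (if i \in S then 1%R else 0%R).

Lemma chiE n (S : {set 'I_n}) i j : chi S i j = if i \in S then 1%R else 0%R.
Proof. by rewrite /chi mxE. Qed.

Lemma chi_supp n (v : 'cV['F_2]_n) : v = chi [set i | v i ord0 != 0%R].
Proof.
apply/matrixP => i j; rewrite (ord1 j) chiE inE.
case: (F2_cases (v i ord0)) => ->; first by rewrite eqxx.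
by rewrite (negbTE F2_10).
Qed.

Lemma chi_add n (S T : {set 'I_n}) : (chi S + chi T)%R = chi (symdiff S T).
Proof.
apply/matrixP => i j; rewrite !mxE in_symdiff.
case: (i \in S); case: (i \in T) => /=; rewrite ?GRing.addr0 ?GRing.add0r //.
all: exact: F2_11.
Qed.

Lemma chi0 n (S : {set 'I_n}) : S != set0 -> chi S != 0%R.
Proof.
case/set0Pn => i iS; apply/negP => /eqP /matrixP /(_ i ord0).
by rewrite chiE iS mxE; apply/eqP; exact: F2_10.
Qed.

Lemma dep_iff m n (A : 'M['F_2]_(m, n)) D :
  dependent_cols A D <-> exists S : {set 'I_n}, [/\ S != set0, S \subset D & (A *m chi S = 0)%R].
Proof.
split.
  move=> [v [nz supp ker]]; exists [set i | v i ord0 != 0%R]; split.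
  - apply/negP => /eqP h; move/negP: nz; apply; apply/eqP.
    rewrite [v]chi_supp h; apply/matrixP => i j; by rewrite chiE in_set0 mxE.
  - apply/subsetP => i; rewrite inE => h; case: (boolP (i \in D)) => // hD; by rewrite supp ?eqxx in h.
  - by rewrite -chi_supp.
move=> [S [nz sub ker]]; exists (chi S); split => //.
- exact: chi0.
- move=> i iD; rewrite chiE; case: ifP => // iS; by rewrite (subsetP sub _ iS) in iD.
Qed.

Lemma circuit_cyc m n (A : 'M['F_2]_(m, n)) C : col_circuit A C -> (A *m chi C = 0)%R.
Proof.
move=> [/dep_iff [S [nz sub ker]] min].
case: (eqVneq S C) => [<- //|ne].
exfalso; apply: (min S); first by rewrite properEneq ne sub.
by apply/dep_iff; exists S; split.
Qed.

Lemma min_cycle m n (A : 'M['F_2]_(m, n)) (R : {set 'I_n}) f :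
  f \in R -> (A *m chi R = 0)%R ->
  exists S : {set 'I_n}, [/\ f \in S, S \subset R & col_circuit A S].
Proof.
move=> fR cR.
pose P := fun S : {set 'I_n} => [&& f \in S, S \subset R & (A *m chi S == 0)%R].
have PR : P R by rewrite /P fR subxx cR eqxx.
case: (arg_minnP (fun S : {set 'I_n} => #|S|) PR) => S /and3P[fS SR /eqP cS] minS.
exists S; split => //; split.
  apply/dep_iff; exists S; split => //; by apply/set0Pn; exists f.
move=> D' pr /dep_iff [T [Tn0 TD cT]].
have TS : T \proper S := sub_proper_trans TD pr.
have ltT := proper_card TS.
have TsubS := proper_sub TS.
case: (boolP (f \in T)) => fT.
  have : P T by rewrite /P fT (subset_trans TsubS SR) cT eqxx.
  by move/minS; rewrite leqNgt ltT.
pose U := symdiff S T.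
have US : U \subset S.
  apply/subsetP => k; rewrite in_symdiff => /orP[/andP[]//|/andP[kT _]].
  exact: (subsetP TsubS).
have : P U.
  rewrite /P (subset_trans US SR) in_symdiff fS fT /= -chi_add mulmxDr cS cT.
  by rewrite GRing.addr0 eqxx.
move/minS; rewrite leqNgt; move/negP; apply.
apply: proper_card; apply/properP; split => //.
case/set0Pn: Tn0 => t tT; exists t; first exact: (subsetP TsubS).
by rewrite /U in_symdiff tT (subsetP TsubS _ tT) /=.
Qed.

Definition tz : trop := Some Reals.Rdefinitions.R0.
Definition tm : trop := Some (Reals.Rdefinitions.Ropp Reals.Rdefinitions.R1).
Lemma tm_le_tz : trop_le tm tz. Proof. rewrite /=; lra. Qed.
Lemma tz_nle_tm : ~ trop_le tz tm. Proof. rewrite /=; lra. Qed.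
Lemma tz_neq_tm : tz <> tm. Proof. move=> [h]; lra. Qed.

Theorem proposition4 (n : nat) (Cs : {set {set 'I_n}}) (C : {set 'I_n}) :
  matroid_circuits Cs -> simple_matroid Cs -> binary_matroid Cs -> C \in Cs ->
  (~ in_BM Cs C <->
   exists C1 C2, [/\ C1 \in Cs, C2 \in Cs, #|C1 :&: C2| = 1 & symdiff C1 C2 = C]).
Proof.
move=> [c0 cinc celim] simp [m [A hA]] hC; split.
- move=> nBM.
  have [B [hB CnB]] : exists B, tropical_basis Cs B /\ C \notin B.
    apply: NNPP => hn; apply: nBM => B hB; apply: NNPP => hCB; apply: hn.
    by exists B; split => //; apply/negP.
  have [e eC] : exists e, e \in C.
    by apply/card_gt0P; have := simp C hC; case: #|C|.
  pose x : 'I_n -> trop := fun i => if (i \in C) && (i != e) then tm else tz.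
  have xe : x e = tz by rewrite /x eqxx andbF.
  have xout i : i \notin C -> x i = tz by move=> h; rewrite /x (negbTE h).
  have xin i : i \in C -> i != e -> x i = tm by move=> h1 h2; rewrite /x h1 h2.
  have xle i : trop_le (x i) tz.
    rewrite /x; case: ifP => _; [exact: tm_le_tz | exact: trop_le_refl].
  have TP : TPpoint x by exists e; rewrite xe.
  have nVC : ~ inV C x.
    move=> [i [j [iC jC ij xij mx]]].
    case: (eqVneq i e) => ie.
      subst i; have je : j != e by rewrite eq_sym.
      by apply: tz_neq_tm; rewrite -xe xij xin.
    by apply: tz_nle_tm; rewrite -(xin i iC ie) -xe; apply: mx.
  have nVB : ~ inVB B x.
    by move/(proj1 ((proj2 hB) x TP)) => h; apply: nVC; apply: h.
  have [D hD] : exists D, ~ (D \in B -> inV D x) by apply: not_all_ex_not.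
  have DB : D \in B by apply: NNPP => h; apply: hD => h'; case: (h h').
  have nVD : ~ inV D x by move=> h; apply: hD.
  have DCs : D \in Cs := subsetP (proj1 hB) _ DB.
  have DneC : D != C by apply/negP => /eqP h; rewrite -h DB in CnB.
  have [f fD fC] : exists2 f, f \in D & f \notin C.
    apply: NNPP => h; move/negP: DneC; apply; apply/eqP; apply: cinc => //.
    apply/subsetP => g gD; apply: NNPP => gC; apply: h; exists g => //; exact/negP.
  have uniq_f g : g \in D -> g \notin C -> g = f.
    move=> gD gC; apply: NNPP => gf; apply: nVD; exists g, f; split => //.
    - exact/eqP.
    - by rewrite !xout.
    - by rewrite !xout.
  have circC : col_circuit A C by apply/hA.
  have circD : col_circuit A D by apply/hA.
  pose R := symdiff C D.
  have fR : f \in R by rewrite /R in_symdiff fD fC /= orbT.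
  have cR : (A *m chi R = 0)%R.
    by rewrite /R -chi_add mulmxDr (circuit_cyc circC) (circuit_cyc circD) GRing.addr0.
  have [S [fS SR circS]] := min_cycle fR cR.
  have SCs : S \in Cs by apply/hA.
  have DS : D :&: S = [set f].
    apply/setP => g; rewrite !inE; apply/andP/eqP.
      move=> [gD gS]; apply: uniq_f => //.
      by move: (subsetP SR _ gS); rewrite /R in_symdiff gD /= andbF.
    by move=> ->; split.
  exists D, S; split => //; first by rewrite DS cards1.
  have sub : symdiff D S \subset C.
    apply/subsetP => g; rewrite in_symdiff => /orP[/andP[gD gS]|/andP[gS gD]].
      case: (boolP (g \in C)) => // gC; by rewrite (uniq_f g gD gC) fS in gS.
    by move: (subsetP SR _ gS); rewrite /R in_symdiff (negbTE gD) /= andbT orbF.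
  have nz : symdiff D S != set0.
    apply/negP => /eqP h.
    have DsubS : D \subset [set f].
      apply/subsetP => g gD; rewrite -DS inE gD /=.
      apply: NNPP => gS; have : g \in symdiff D S by rewrite in_symdiff gD /=; apply/orP; left; apply/negP.
      by rewrite h in_set0.
    have := subset_leq_card DsubS; rewrite cards1 => h1.
    by have := simp D DCs; rewrite ltnNge (leq_trans h1).
  have cyc : (A *m chi (symdiff D S) = 0)%R.
    by rewrite -chi_add mulmxDr (circuit_cyc circD) (circuit_cyc circS) GRing.addr0.
  have np : ~~ (symdiff D S \proper C).
    apply/negP => pr; apply: (proj2 circC _ pr); apply/dep_iff.
    by exists (symdiff D S); split.
  apply/eqP; rewrite eqEsubset sub /=.
  by move: np; rewrite properE sub /= negbK.
- move=> [C1 [C2 [h1 h2 hI hS]]] hBM.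
  have [e He] : exists e, C1 :&: C2 = [set e] by apply/cards1P; rewrite hI.
  have eI : e \in C1 :&: C2 by rewrite He set11.
  move: (eI); rewrite inE => /andP[eC1 eC2].
  have eS : e \notin C by rewrite -hS in_symdiff eC1 eC2.
  have C1ne : C1 != C by apply/negP => /eqP h; rewrite -h eC1 in eS.
  have C2ne : C2 != C by apply/negP => /eqP h; rewrite -h eC2 in eS.
  have : C \in Cs :\ C.
    apply: hBM; split; first exact: subsetDl.
    move=> x _; split.
      move=> hB D hD; case: (eqVneq D C) => [->|ne].
        rewrite -hS; apply: (inV_symdiff He); apply: hB; by rewrite !inE ?C1ne ?C2ne.
      by apply: hB; rewrite !inE ne.
    by move=> hCs D; rewrite inE => /andP[_ hD]; apply: hCs.
  by rewrite !inE eqxx.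
Qed.
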